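(* The topological Markov shift $(\Omega,\sigma)$ is topologically mixing and has the BIP property.
   Context: For $n\ge1$ let $\mathcal A_n=\{(\mathbf1,k)_n:1\le k\le n+1\}\cup\{(\mathbf2,1)_n\}\cup\{(\mathbf3,k)_n:1\le k\le n\}$; for $e=(\mathbf t,k)_n$ its type is $\mathbf t_e=\mathbf t$. For $\mathbf t\in\{\mathbf1,\mathbf2,\mathbf3\}$ and $\hat e\in\mathcal A_n$, $\mathbf t\to\hat e$ iff $(\mathbf t,\hat e)$ is $(\mathbf1,(\mathbf2,1)_n)$, $(\mathbf2,(\mathbf1,k)_n)$ with $k\le n+1$, $(\mathbf2,(\mathbf3,k)_n)$ with $k\le n$, $(\mathbf3,(\mathbf1,k)_n)$ with $k\le n$, or $(\mathbf3,(\mathbf3,k)_n)$ with $k\le n-1$; for $e,\hat e$ in the alphabets, $e\to\hat e$ iff $\mathbf t_e\to\hat e$. $\mathcal A=\bigsqcup_{n\ge1}\mathcal A_n$ (countable alphabet); $\Omega=\{x_1x_2\cdots\in\mathcal A^{\mathbb N}:x_j\to x_{j+1}\ \forall j\}$ with metric $2^{-|x\wedge y|}$ and left shift $\sigma$. Topologically mixing: for all $e,\hat e\in\mathcal A$ there is $N$ such that for all $n\ge N$ there is an admissible word of length $n$ from $e$ to $\hat e$. BIP: there is a finite $\mathcal S\subset\mathcal A$ such that for every $e\in\mathcal A$ there are $s_1,s_2\in\mathcal S$ with $s_1\to e\to s_2$. *)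

(* Defs.v *)
From Stdlib Require Import Arith Lia List.

Inductive typ := T1 | T2 | T3.

(* A letter (t, k)_n is encoded by its type t, its level n and its index k. *)
Record letter := Letter { ltyp : typ; llev : nat; lidx : nat }.

Definition inA (e : letter) : Prop :=
  1 <= llev e /\
  match ltyp e with
  | T1 => 1 <= lidx e <= llev e + 1
  | T2 => lidx e = 1
  | T3 => 1 <= lidx e <= llev e
  end.

Definition typ_to (t : typ) (eh : letter) : Prop :=
  match t, ltyp eh with
  | T1, T2 => lidx eh = 1
  | T2, T1 => lidx eh <= llev eh + 1
  | T2, T3 => lidx eh <= llev eh
  | T3, T1 => lidx eh <= llev eh
  | T3, T3 => lidx eh <= llev eh - 1
  | _, _ => False
  end.

Definition trans (e eh : letter) : Prop := typ_to (ltyp e) eh.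

Definition Omega (x : nat -> letter) : Prop :=
  (forall j, inA (x j)) /\ (forall j, trans (x j) (x (S j))).

Definition admissible_word (m : nat) (e eh : letter) (w : nat -> letter) : Prop :=
  1 <= m /\ w 0 = e /\ w (m - 1) = eh /\
  (forall i, i < m -> inA (w i)) /\
  (forall i, i + 1 < m -> trans (w i) (w (i + 1))).

Definition topologically_mixing : Prop :=
  forall e eh, inA e -> inA eh ->
    exists N, forall m, N <= m -> exists w, admissible_word m e eh w.

Definition BIP : Prop :=
  exists S : list letter, (forall s, In s S -> inA s) /\
    forall e, inA e -> exists s1 s2, In s1 S /\ In s2 S /\ trans s1 e /\ trans e s2.

(* Main.v *)
Require Import Defs.
From Stdlib Require Import Arith Lia List.

Definition reach m e eh := exists w, admissible_word m e eh w.

Lemma reach_comp m n e f g : reach m e f -> reach n f g -> reach (m + n - 1) e g.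
Proof.
  intros [w1 (Hm & H0 & Hl & Hin & Htr)] [w2 (Hn & H0' & Hl' & Hin' & Htr')].
  exists (fun i => if i <? m then w1 i else w2 (i - (m - 1))).
  split; [|split; [|split; [|split]]].
  - lia.
  - destruct (Nat.ltb_spec 0 m); [assumption|lia].
  - destruct (Nat.ltb_spec (m + n - 1 - 1) m).
    + assert (n = 1) by lia. subst n. replace (m+1-1-1) with (m-1) by lia.
      rewrite Hl, <- H0', <- Hl'. reflexivity.
    + rewrite <- Hl'. f_equal. lia.
  - intros i Hi. destruct (Nat.ltb_spec i m); [apply Hin; lia| apply Hin'; lia].
  - intros i Hi. destruct (Nat.ltb_spec i m); destruct (Nat.ltb_spec (i+1) m).
    + apply Htr; lia.
    + assert (i = m - 1) by lia. subst i. rewrite Hl, <- H0'.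
      replace (m - 1 + 1 - (m - 1)) with (0 + 1) by lia. apply Htr'. lia.
    + lia.
    + replace (i + 1 - (m - 1)) with ((i - (m-1)) + 1) by lia. apply Htr'. lia.
Qed.

Lemma reach1 e : inA e -> reach 1 e e.
Proof.
  intros H. exists (fun _ => e). split; [lia|split; [reflexivity|split; [reflexivity|split]]].
  - intros; exact H.
  - intros; lia.
Qed.

Lemma reach2 e f : inA e -> inA f -> trans e f -> reach 2 e f.
Proof.
  intros He Hf Ht. exists (fun i => if i =? 0 then e else f).
  split; [lia|split; [reflexivity|split; [reflexivity|split]]].
  - intros i Hi. destruct (i =? 0); auto.
  - intros i Hi. assert (i = 0) by lia. subst. simpl. exact Ht.
Qed.

Definition B1 := Letter T1 1 1.
Definition A2 := Letter T2 1 1.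
Definition C3 := Letter T3 1 1.

Lemma inB1 : inA B1. Proof. unfold inA; simpl; lia. Qed.
Lemma inA2 : inA A2. Proof. unfold inA; simpl; lia. Qed.
Lemma inC3 : inA C3. Proof. unfold inA; simpl; lia. Qed.

Lemma loop s : 2 <= s -> reach (s + 1) A2 A2.
Proof.
  assert (L2 : reach 3 A2 A2).
  { change 3 with (2 + 2 - 1). eapply reach_comp.
    - apply reach2; [apply inA2|apply inB1|unfold trans, typ_to; simpl; lia].
    - apply reach2; [apply inB1|apply inA2|unfold trans, typ_to; simpl; lia]. }
  assert (L3 : reach 4 A2 A2).
  { change 4 with (3 + 2 - 1). eapply reach_comp.
    - change 3 with (2 + 2 - 1). eapply reach_comp.
      + apply reach2; [apply inA2|apply inC3|unfold trans, typ_to; simpl; lia].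
      + apply reach2; [apply inC3|apply inB1|unfold trans, typ_to; simpl; lia].
    - apply reach2; [apply inB1|apply inA2|unfold trans, typ_to; simpl; lia]. }
  intros Hs.
  induction s as [s IH] using lt_wf_ind.
  destruct (Nat.eq_dec s 2) as [->|]; [exact L2|].
  destruct (Nat.eq_dec s 3) as [->|]; [exact L3|].
  replace (s + 1) with ((s - 2 + 1) + 3 - 1) by lia.
  eapply reach_comp; [apply IH; lia| exact L2].
Qed.

Lemma to_hub e : inA e -> exists p, 1 <= p <= 2 /\ reach (p + 1) e A2.
Proof.
  intros He. destruct e as [t n k]. destruct t.
  - exists 1. split; [lia|]. apply reach2; auto. apply inA2. unfold trans, typ_to; simpl; lia.
  - exists 2. split; [lia|]. change (2+1) with (2 + 2 - 1). eapply reach_comp.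
    + apply reach2; auto. apply inB1. unfold trans, typ_to; simpl; lia.
    + apply reach2; [apply inB1|apply inA2|unfold trans, typ_to; simpl; lia].
  - exists 2. split; [lia|]. change (2+1) with (2 + 2 - 1). eapply reach_comp.
    + apply reach2; auto. apply inB1. unfold trans, typ_to; simpl; lia.
    + apply reach2; [apply inB1|apply inA2|unfold trans, typ_to; simpl; lia].
Qed.

Lemma from_hub e : inA e -> exists q, 1 <= q <= 2 /\ reach (q + 1) A2 e.
Proof.
  intros He. destruct e as [t n k]. destruct He as [Hn Hk]. simpl in *. destruct t.
  - exists 1. split; [lia|]. apply reach2; [apply inA2|split; simpl; lia|].
    unfold trans, typ_to; simpl; lia.
  - exists 2. split; [lia|]. change (2+1) with (2 + 2 - 1). eapply reach_comp.
    + apply reach2; [apply inA2|apply inB1|unfold trans, typ_to; simpl; lia].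
    + apply reach2; [apply inB1|split; simpl; lia|unfold trans, typ_to; simpl; lia].
  - exists 1. split; [lia|]. apply reach2; [apply inA2|split; simpl; lia|].
    unfold trans, typ_to; simpl; lia.
Qed.

Theorem proposition4p1 : topologically_mixing /\ BIP.
Proof.
  split.
  - intros e eh He Heh. exists 8. intros m Hm.
    destruct (to_hub e He) as [p [Hp R1]].
    destruct (from_hub eh Heh) as [q [Hq R3]].
    assert (R2 : reach (m - 1 - p - q + 1) A2 A2) by (apply loop; lia).
    assert (R := reach_comp _ _ _ _ _ (reach_comp _ _ _ _ _ R1 R2) R3).
    replace m with (p + 1 + (m - 1 - p - q + 1) - 1 + (q + 1) - 1) by lia.
    exact R.
  - exists (B1 :: A2 :: C3 :: nil). split.
    + intros s [<-|[<-|[<-|[]]]]; [apply inB1|apply inA2|apply inC3].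
    + intros [t n k] [Hn Hk]; simpl in *. destruct t.
      * exists A2, A2. simpl; unfold trans, typ_to; simpl; repeat split; auto; lia.
      * exists B1, B1. simpl; unfold trans, typ_to; simpl; repeat split; auto; lia.
      * exists A2, B1. simpl; unfold trans, typ_to; simpl; repeat split; auto; lia.
Qed.
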